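(* Let $G=(V,E)$ be a finite graph, $x_e>0$ for $e\in E$, $\Omega=\{0,1\}^E$ and $\Sigma\subset\Omega$. Suppose that $\Sigma$ contains two elements $\eta'\subset\eta$ with $\prod_{e\in\eta'}x_e<\prod_{e\in\eta}x_e$. Then there exists no probability measure $\mathscr{P}$ on $\Omega\times\Sigma$ whose marginal on $\Sigma$ satisfies $\mathscr{P}_\Sigma[\eta]\propto\prod_{e\in\eta}x_e$ and such that, for every $\omega$ with $\mathscr{P}_\Omega[\omega]\neq0$, the conditional measure $\mathscr{P}[\cdot\mid\omega]$ is the uniform measure on $\Sigma^\downarrow(\omega):=\{\eta\in\Sigma\mid\eta\subset\omega\}$.
   Context: Elements of $\{0,1\}^E$ are identified with subsets of $E$; $\mathscr{P}_\Omega$ denotes the marginal on $\Omega$. *)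

(* Defs.v *)
From HB Require Import structures.
From mathcomp Require Import all_boot all_order all_algebra.
From mathcomp Require Export reals.
Set Implicit Arguments. Unset Strict Implicit. Unset Printing Implicit Defensive.
Import Order.TTheory GRing.Theory Num.Theory.
Local Open Scope ring_scope.

(* Configurations omega in {0,1}^E are identified with subsets of E : {set E}. *)
Section Defs.
Variables (R : realType) (E : finType).

Definition weight (x : E -> R) (eta : {set E}) : R := \prod_(e in eta) x e.

(* P is a probability measure on Omega x Sigma, viewed as a function on
   {set E} * {set E} that vanishes outside Omega x Sigma. *)
Definition is_prob_on (Sigma : {set {set E}}) (P : {ffun {set E} * {set E} -> R}) : Prop :=
  [/\ forall p, 0 <= P p,
      \sum_p P p = 1
    & forall omega eta, eta \notin Sigma -> P (omega, eta) = 0].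

Definition margO (P : {ffun {set E} * {set E} -> R}) (omega : {set E}) : R :=
  \sum_(eta : {set E}) P (omega, eta).

Definition margS (P : {ffun {set E} * {set E} -> R}) (eta : {set E}) : R :=
  \sum_(omega : {set E}) P (omega, eta).

Definition down (Sigma : {set {set E}}) (omega : {set E}) : {set {set E}} :=
  [set eta in Sigma | eta \subset omega].
End Defs.

(* Main.v *)
Require Import Defs.
From mathcomp Require Import all_boot all_order all_algebra.
Import Order.TTheory GRing.Theory Num.Theory.
Local Open Scope ring_scope.

Lemma le_sum1 (R : realType) (T : finType) (F : T -> R) (i : T) :
  (forall j, 0 <= F j) -> F i <= \sum_j F j.
Proof.
move=> F0; rewrite (bigD1 i) //= lerDl; apply: sumr_ge0 => j _; exact: F0.
Qed.

Theorem lemma3p4 (R : realType) (E : finType) (x : E -> R)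
  (hx : forall e, 0 < x e) (Sigma : {set {set E}}) (eta' eta : {set E})
  (h' : eta' \in Sigma) (h : eta \in Sigma) (hsub : eta' \subset eta)
  (hlt : weight x eta' < weight x eta) :
  ~ (exists P : {ffun {set E} * {set E} -> R},
       [/\ is_prob_on Sigma P,
           (exists c : R, forall zeta, zeta \in Sigma -> margS P zeta = c * weight x zeta)
         & forall omega, margO P omega != 0 ->
             forall zeta, P (omega, zeta) / margO P omega =
               (if zeta \in down Sigma omega then (#|down Sigma omega|%:R)^-1 else 0)]).
Proof.
move=> [P [[P0 P1 Pout] [c hc] hcond]].
have wpos : forall z, 0 < weight x z.
  by move=> z; rewrite /weight; apply: prodr_gt0 => e _; exact: hx.
have key : forall omega, P (omega, eta) <= P (omega, eta').
  move=> omega.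
  have [m0|mn0] := eqVneq (margO P omega) 0.
    apply: le_trans (P0 _).
    have : P (omega, eta) <= margO P omega.
      rewrite /margO; apply: (@le_sum1 R _ (fun z => P (omega, z)) eta) => j; exact: P0.
    by rewrite m0.
  have eqP1 : forall z, P (omega, z) =
      (if z \in down Sigma omega then (#|down Sigma omega|%:R)^-1 else 0) * margO P omega.
    by move=> z; rewrite -(hcond omega mn0 z) divfK.
  rewrite (eqP1 eta).
  case: ifP => hd.
    have hd' : eta' \in down Sigma omega.
      move: hd; rewrite !inE => /andP [_ s]; rewrite h' /=.
      exact: subset_trans hsub s.
    by rewrite (eqP1 eta') hd'.
  rewrite mul0r; apply: P0.
have hS : margS P eta <= margS P eta'.
  by apply: ler_sum => i _; exact: key.
rewrite (hc _ h) (hc _ h') in hS.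
have cle : c <= 0.
  rewrite leNgt; apply/negP => cpos.
  by move: hS; rewrite ler_pM2l // leNgt hlt.
have cge : 0 <= c.
  have : 0 <= margS P eta by apply: sumr_ge0 => i _; exact: P0.
  by rewrite (hc _ h) pmulr_lge0.
have c0 : c = 0 by apply/eqP; rewrite eq_le cle cge.
have allz : forall p, P p = 0.
  case=> om z.
  case: (boolP (z \in Sigma)) => hz; last by exact: Pout.
  apply/eqP; rewrite eq_le P0 andbT.
  have : P (om, z) <= margS P z.
    rewrite /margS; apply: (@le_sum1 R _ (fun o => P (o, z)) om) => j; exact: P0.
  by rewrite (hc _ hz) c0 mul0r.
move: P1; rewrite big1 => [|p _]; last exact: allz.
by move/eqP; rewrite eq_sym oner_eq0.
Qed.
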